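(* Let $\Gamma$ be a finite simple graph and $g\in G(\Gamma)$. The following are equivalent: (i) $g$ is cyclically reduced; (ii) there is no geodesic decomposition $g=u^{-1}hu$ with $u,h\in G(\Gamma)$ and $u\ne1$; (iii) $|g^n|=n|g|$ for all $n\ge2$; (iv) $|g^n|=n|g|$ for some $n\ge 2$; (v) for every geodesic decomposition $g=g_1g_2$, the decomposition $g_2g_1$ is also geodesic (i.e. $|g_2g_1|=|g_2|+|g_1|$).
   Context: $G(\Gamma)=\langle v\in V(\Gamma)\mid [v_i,v_j]=1 \text{ if } \{v_i,v_j\}\notin E(\Gamma)\rangle$. $|g|$ is word length with respect to $V(\Gamma)$. A decomposition $g=g_1\cdots g_k$ is geodesic if $|g|=|g_1|+\cdots+|g_k|$. An element is cyclically reduced if it has minimum word length in its conjugacy class. *)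

(* Defs.v *)
From mathcomp Require Import all_boot.
From Stdlib Require Import Relation_Operators ClassicalDescription.
Set Implicit Arguments. Unset Strict Implicit. Unset Printing Implicit Defensive.

(* Group G(Gamma) = < V | [v_i,v_j] = 1 if {v_i,v_j} is NOT an edge >.
   Elements are represented by words over letters V * bool
   ((v,false) = v, (v,true) = v^-1); two words represent the same element
   iff they are related by the congruence generated by free cancellation
   and the defining commutations. *)
Section RAAG.
Variables (V : finType) (E : rel V).

Definition letter := (V * bool)%type.
Definition linv (a : letter) : letter := (a.1, ~~ a.2).
Definition winv (w : seq letter) : seq letter := rev (map linv w).

Inductive rstep : seq letter -> seq letter -> Prop :=
| rs_cancel (w1 w2 : seq letter) (a : letter) :
    rstep (w1 ++ [:: a; linv a] ++ w2) (w1 ++ w2)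
| rs_comm (w1 w2 : seq letter) (a b : letter) :
    ~~ E a.1 b.1 -> rstep (w1 ++ [:: a; b] ++ w2) (w1 ++ [:: b; a] ++ w2).

Definition gEq : seq letter -> seq letter -> Prop := clos_refl_sym_trans _ rstep.

Definition decP (P : Prop) : bool :=
  if excluded_middle_informative P then true else false.

Definition has_len (w : seq letter) : pred nat :=
  fun n => decP (exists w', gEq w w' /\ size w' = n).

Lemma has_len_ex (w : seq letter) : exists n, has_len w n.
Proof.
exists (size w); rewrite /has_len /decP.
case: excluded_middle_informative => // H; exfalso; apply: H.
by exists w; split => //; apply: rst_refl.
Qed.

Definition glen (w : seq letter) : nat := ex_minn (has_len_ex w).

Definition gpow (w : seq letter) (n : nat) : seq letter := flatten (nseq n w).

Definition cyc_reduced (g : seq letter) : Prop :=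
  forall u, glen g <= glen (winv u ++ g ++ u).

End RAAG.

(* Main.v *)
Require Import Defs.
From mathcomp Require Import all_boot.
From mathcomp Require Import zify.
From Stdlib Require Import Relation_Operators ClassicalDescription Classical.
Set Implicit Arguments. Unset Strict Implicit. Unset Printing Implicit Defensive.

Section Main.
Variables (V : finType) (E : rel V).
Hypothesis Esym : symmetric E.
Hypothesis Eirr : irreflexive E.

Local Notation letter := (letter V).
Local Notation gEq := (gEq E).
Local Notation glen := (glen E).
Local Notation rstep := (rstep E).

Lemma linvK : involutive (@linv V). Proof. by case=> v b; rewrite /linv /= negbK. Qed.
Lemma linv_neq (a : letter) : linv a != a.
Proof. by case: a => v b; rewrite /linv /= xpair_eqE eqxx /=; case: b. Qed.
Lemma letter_cases (a b : letter) : a.1 = b.1 -> b = a \/ b = linv a.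
Proof.
case: a => v x; case: b => w y /= ->; rewrite /linv /=.
by case: x; case: y; auto.
Qed.

Lemma gEq_refl w : gEq w w. Proof. exact: rst_refl. Qed.
Lemma gEq_sym w w' : gEq w w' -> gEq w' w. Proof. exact: rst_sym. Qed.
Lemma gEq_trans w1 w2 w3 : gEq w1 w2 -> gEq w2 w3 -> gEq w1 w3.
Proof. exact: rst_trans. Qed.
Lemma gEq_step w w' : rstep w w' -> gEq w w'. Proof. exact: rst_step. Qed.

Lemma rstep_ctx p q w w' : rstep w w' -> rstep (p ++ w ++ q) (p ++ w' ++ q).
Proof.
case=> [w1 w2 a|w1 w2 a b H].
  by move: (rs_cancel E (p ++ w1) (w2 ++ q) a); rewrite -!catA.
by move: (rs_comm (p ++ w1) (w2 ++ q) H); rewrite -!catA.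
Qed.

Lemma gEq_ctx p q w w' : gEq w w' -> gEq (p ++ w ++ q) (p ++ w' ++ q).
Proof.
elim=> [x y H|x|x y _ IH|x y z _ IH1 _ IH2].
- by apply: gEq_step; apply: rstep_ctx.
- exact: gEq_refl.
- exact: gEq_sym.
- exact: gEq_trans IH1 IH2.
Qed.

Lemma gEq_cat a a' b b' : gEq a a' -> gEq b b' -> gEq (a ++ b) (a' ++ b').
Proof.
move=> H1 H2; apply: gEq_trans (_ : gEq (a' ++ b) _).
  by move: (gEq_ctx [::] b H1); rewrite /= .
by move: (gEq_ctx a' [::] H2); rewrite !cats0.
Qed.

Lemma gEq_cons x b b' : gEq b b' -> gEq (x :: b) (x :: b').
Proof. by move=> H; apply: (gEq_cat (gEq_refl [:: x]) H). Qed.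

Definition dep (u v : V) := E u v || (u == v).
Lemma dep_sym u v : dep u v = dep v u.
Proof. by rewrite /dep Esym eq_sym. Qed.
Lemma dep_refl u : dep u u. Proof. by rewrite /dep eqxx orbT. Qed.

Definition dl (a : letter) : pred letter := fun z => dep a.1 z.1.
Definition cancels (a : letter) r := ohead (filter (dl a) r) == Some (linv a).

Fixpoint cancel (a : letter) r : option (seq letter) :=
  match r with
  | [::] => None
  | x :: r' => if dep a.1 x.1 then (if x == linv a then Some r' else None)
               else omap (cons x) (cancel a r')
  end.

Lemma cancelE a r : isSome (cancel a r) = cancels a r.
Proof.
rewrite /cancels; elim: r => [|x r IH] //=; rewrite {1}/dl.
case: (dep a.1 x.1) => /=; last by rewrite -IH; case: cancel.
by case: eqP => [->|/eqP H]; rewrite ?eqxx //; apply/esym/negbTE; rewrite /eq_op /= H.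
Qed.

Definition pushl a r := if cancel a r is Some s then s else a :: r.

Fixpoint red (r : seq letter) := if r is x :: r' then red r' && ~~ cancels x r' else true.

Definition inp (u v : V) : pred letter := fun z => (z.1 == u) || (z.1 == v).
Definition proj u v (r : seq letter) := filter (inp u v) r.
Definition ceq r r' := forall u v, dep u v -> proj u v r = proj u v r'.

Lemma ceq_refl r : ceq r r. Proof. by []. Qed.
Lemma ceq_sym r r' : ceq r r' -> ceq r' r. Proof. by move=> H u v d; rewrite H. Qed.
Lemma ceq_trans r1 r2 r3 : ceq r1 r2 -> ceq r2 r3 -> ceq r1 r3.
Proof. by move=> H1 H2 u v d; rewrite H1 ?H2. Qed.

Lemma inp_dep u v a x : dep u v -> inp u v a -> inp u v x -> dep a.1 x.1.
Proof.
rewrite /inp => d /orP[]/eqP-> /orP[]/eqP->; rewrite ?dep_refl //.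
by rewrite dep_sym.
Qed.

Lemma inp_linv u v a : inp u v (linv a) = inp u v a. Proof. by []. Qed.

Lemma proj_cancel a r s u v : dep u v -> cancel a r = Some s ->
  proj u v s = if inp u v a then behead (proj u v r) else proj u v r.
Proof.
move=> d; elim: r s => [|x r IH] s //=.
case D: (dep a.1 x.1).
  case: eqP => // -> [<-]; rewrite /proj /= -/(proj u v r) inp_linv.
  by case: inp.
case C: (cancel a r) => [s'|] //= [<-]; rewrite /proj /= -!/(proj u v _).
rewrite (IH s') //.
case Hx: (inp u v x); case Ha: (inp u v a) => //.
by move: (inp_dep d Ha Hx); rewrite D.
Qed.

Lemma ohead_sub (P Q : pred letter) r y t : subpred P Q -> filter Q r = y :: t -> P y ->
  ohead (filter P r) = Some y.
Proof.
move=> sPQ Hf Py.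
have -> : filter P r = filter P (filter Q r).
  rewrite -filter_predI; apply: eq_filter => z /=.
  by case Pz: (P z); rewrite ?(sPQ _ Pz).
by rewrite Hf /= Py.
Qed.

Lemma cancels_filter a r : cancels a r -> exists t, filter (dl a) r = linv a :: t.
Proof. by rewrite /cancels; case: filter => [|y t] //= /eqP [->]; exists t. Qed.

Lemma filter_sub (P Q : pred letter) r : subpred P Q -> filter P r = filter P (filter Q r).
Proof.
move=> sPQ; rewrite -filter_predI; apply: eq_filter => z /=.
by case Pz: (P z); rewrite ?(sPQ _ Pz).
Qed.

Lemma subp_inp a u : dep u a.1 -> subpred (inp u a.1) (dl a).
Proof. by move=> d z /orP[]/eqP Hz; rewrite /dl Hz ?dep_refl // dep_sym. Qed.

Lemma status a r r' : (forall u, dep u a.1 -> proj u a.1 r = proj u a.1 r') ->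
  cancels a r -> cancels a r'.
Proof.
move=> H ca; have [t Ht] := cancels_filter ca.
have Hr u : dep u a.1 -> ohead (proj u a.1 r) = Some (linv a).
  by move=> d; rewrite /proj (ohead_sub (subp_inp d) Ht) // /inp /= eqxx orbT.
case Ht': (filter (dl a) r') => [|y t'].
  have := Hr _ (dep_refl a.1); rewrite H ?dep_refl //.
  by rewrite /proj (filter_sub _ (subp_inp (dep_refl a.1))) Ht'.
have dy : dep y.1 a.1.
  have : y \in filter (dl a) r' by rewrite Ht' inE eqxx.
  by rewrite mem_filter => /andP[]; rewrite /dl dep_sym.
have := Hr _ dy; rewrite H //.
rewrite /proj (ohead_sub (subp_inp dy) Ht'); last by rewrite /inp eqxx.
by move=> -[Ey]; rewrite /cancels Ht' /= Ey eqxx.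
Qed.

Lemma status_eq a r r' : (forall u, dep u a.1 -> proj u a.1 r = proj u a.1 r') ->
  cancels a r = cancels a r'.
Proof.
move=> H; apply/idP/idP; first exact: status.
by apply: status => u d; rewrite H.
Qed.

Lemma proj_pushl u v a r : dep u v -> proj u v (pushl a r) =
  if inp u v a then (if cancels a r then behead (proj u v r) else a :: proj u v r)
  else proj u v r.
Proof.
move=> d; rewrite /pushl -cancelE; case C: cancel => [s|] /=.
  by rewrite (proj_cancel d C); case: inp.
by rewrite /proj /=; case: inp.
Qed.

Lemma ceq_pushl a r r' : ceq r r' -> ceq (pushl a r) (pushl a r').
Proof.
move=> H u v d; rewrite !proj_pushl // H //.
by rewrite (status_eq (r' := r')) // => w dw; rewrite H.
Qed.

Lemma cancels_proj a r u v : dep u v -> inp u v a -> cancels a r ->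
  proj u v r = linv a :: behead (proj u v r).
Proof.
move=> d ia ca; have [t Ht] := cancels_filter ca.
have sub : subpred (inp u v) (dl a) by move=> z iz; exact: inp_dep d ia iz.
rewrite /proj (filter_sub _ sub) Ht /= inp_linv ia //.
Qed.

Lemma red_twice a r s : red r -> cancel a r = Some s -> cancel (linv a) s = None.
Proof.
elim: r s => [|x r IH] s //= /andP[rr nc].
case D: (dep a.1 x.1).
  case: eqP => // Ex [<-]; move: nc; rewrite Ex -cancelE.
  by case: cancel.
case C: (cancel a r) => [s'|] //= [<-] /=; rewrite D.
by rewrite (IH s').
Qed.

Lemma ceq_twice a r : red r -> ceq (pushl (linv a) (pushl a r)) r.
Proof.
move=> rr; case ca: (cancels a r); last first.
  rewrite /pushl -cancelE in ca *; case: cancel ca => // _ /=.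
  by rewrite dep_refl linvK eqxx.
move=> u v d; rewrite !proj_pushl // inp_linv.
have -> : cancels (linv a) (pushl a r) = false.
  by move: ca; rewrite /pushl -!cancelE; case C: cancel => [s|] // _; rewrite (red_twice rr C).
rewrite ca; case ia: (inp u v a) => //.
by rewrite -(cancels_proj d ia ca).
Qed.

Lemma red_pushl a r : red r -> red (pushl a r).
Proof.
rewrite /pushl; case C: cancel => [s|]; last by move=> rr /=; rewrite rr -cancelE C.
elim: r s C => [|x r IH] s //=.
case D: (dep a.1 x.1).
  by case: eqP => // _ [<-] /andP[].
case C: (cancel a r) => [s'|] //= [<-] /andP[rr nc] /=.
rewrite (IH s') //=.
rewrite (status_eq (r' := r)) // => u d.
rewrite (proj_cancel d C).
case ia: (inp u x.1 a) => //.
have ix : inp u x.1 x by rewrite /inp eqxx orbT.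
by move: (inp_dep d ia ix); rewrite D.
Qed.

Lemma ceq_comm a b r : red r -> ~~ E a.1 b.1 ->
  ceq (pushl b (pushl a r)) (pushl a (pushl b r)).
Proof.
move=> rr nE; case: (eqVneq a.1 b.1) => [eab|nab].
  case: (letter_cases eab) => ->; first exact: ceq_refl.
  apply: ceq_trans (ceq_twice _ rr) _.
  apply: ceq_sym; have := ceq_twice (linv a) rr; by rewrite linvK.
have nd : ~~ dep a.1 b.1 by rewrite /dep negb_or nE nab.
have sta : cancels b (pushl a r) = cancels b r.
  apply: status_eq => u d; rewrite proj_pushl //.
  case ia: (inp u b.1 a) => //.
  have ix : inp u b.1 b by rewrite /inp eqxx orbT.
  by move: (inp_dep d ia ix); rewrite (negbTE nd).
have stb : cancels a (pushl b r) = cancels a r.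
  apply: status_eq => u d; rewrite proj_pushl //.
  case ib: (inp u a.1 b) => //.
  have ix : inp u a.1 a by rewrite /inp eqxx orbT.
  by move: (inp_dep d ib ix); rewrite dep_sym (negbTE nd).
move=> u v d; rewrite !proj_pushl // sta stb.
case ia: (inp u v a); case ib: (inp u v b) => //.
by move: (inp_dep d ia ib); rewrite (negbTE nd).
Qed.

Definition nf (w : seq letter) := foldr pushl [::] w.

Lemma red_foldr r w : red r -> red (foldr pushl r w).
Proof. by elim: w => [|x w IH] //= rr; apply: red_pushl; apply: IH. Qed.

Lemma red_nf w : red (nf w). Proof. exact: red_foldr. Qed.

Lemma ceq_foldr r r' w : ceq r r' -> ceq (foldr pushl r w) (foldr pushl r' w).
Proof. by elim: w => [|x w IH] //= H; apply: ceq_pushl; apply: IH. Qed.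

Lemma nf_cat w1 w2 : nf (w1 ++ w2) = foldr pushl (nf w2) w1.
Proof. by rewrite /nf foldr_cat. Qed.

Lemma rstep_nf w w' : rstep w w' -> ceq (nf w) (nf w').
Proof.
case=> [w1 w2 a|w1 w2 a b H]; rewrite !nf_cat; apply: ceq_foldr => /=.
  by have := ceq_twice (linv a) (red_nf w2); rewrite linvK.
by apply: ceq_comm; rewrite ?red_nf // Esym.
Qed.

Lemma gEq_nf w w' : gEq w w' -> ceq (nf w) (nf w').
Proof.
elim=> [x y H|x|x y _ IH|x y z _ IH1 _ IH2].
- exact: rstep_nf.
- exact: ceq_refl.
- exact: ceq_sym.
- exact: ceq_trans IH1 IH2.
Qed.

Lemma ceq_size r r' : ceq r r' -> size r = size r'.
Proof.
move=> H; apply: perm_size; rewrite /perm_eq; apply/allP => x _; apply/eqP.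
have e s : count_mem x s = count_mem x (proj x.1 x.1 s).
  rewrite /proj count_filter; apply: eq_count => z /=.
  by case: eqP => // ->; rewrite /inp eqxx.
by rewrite e (e r') H ?dep_refl.
Qed.

Lemma cancel_gEq a r s : cancel a r = Some s -> gEq s (a :: r).
Proof.
elim: r s => [|x r IH] s //=.
case D: (dep a.1 x.1).
  case: eqP => // -> [<-]; apply: gEq_sym; apply: gEq_step.
  exact: (rs_cancel E [::] r a).
case C: (cancel a r) => [s'|] //= [<-].
apply: gEq_trans (gEq_cons x (IH s' C)) _.
apply: gEq_step; apply: (rs_comm [::] r).
by apply/negP => Ex; move: D; rewrite /dep Esym Ex.
Qed.

Lemma pushl_gEq a r : gEq (pushl a r) (a :: r).
Proof.
rewrite /pushl; case C: cancel => [s|]; last exact: gEq_refl.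
exact: cancel_gEq.
Qed.

Lemma nf_gEq w : gEq (nf w) w.
Proof.
elim: w => [|x w IH] /=; first exact: gEq_refl.
exact: gEq_trans (pushl_gEq _ _) (gEq_cons x IH).
Qed.

Lemma size_cancel a r s : cancel a r = Some s -> (size s).+1 = size r.
Proof.
elim: r s => [|x r IH] s //=.
case: (dep a.1 x.1); first by case: eqP => // _ [<-].
by case C: (cancel a r) => [s'|] //= [<-] /=; rewrite (IH s').
Qed.

Lemma size_pushl a r : size (pushl a r) <= (size r).+1.
Proof.
rewrite /pushl; case C: cancel => [s|] //.
by rewrite -(size_cancel C) leqW.
Qed.

Lemma size_nf w : size (nf w) <= size w.
Proof.
elim: w => [|x w IH] //=.
exact: leq_trans (size_pushl _ _) _.
Qed.

Lemma has_lenP w n : has_len E w n <-> exists w', gEq w w' /\ size w' = n.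
Proof.
rewrite /has_len /Defs.decP.
case: excluded_middle_informative => H; split => // HH; exfalso; exact: H HH.
Qed.

Lemma glen_nf w : glen w = size (nf w).
Proof.
rewrite /Defs.glen; case: ex_minnP => n /has_lenP [w' [H1 H2]] Hmin.
apply/eqP; rewrite eqn_leq; apply/andP; split.
  apply: Hmin; apply/has_lenP; exists (nf w); split => //.
  exact: gEq_sym (nf_gEq w).
rewrite -H2 (ceq_size (gEq_nf H1)); exact: size_nf.
Qed.

Lemma glen_eq w w' : gEq w w' -> glen w = glen w'.
Proof. by move=> H; rewrite !glen_nf (ceq_size (gEq_nf H)). Qed.

Lemma glen_size (w : seq letter) : glen w <= size w.
Proof. rewrite glen_nf; exact: size_nf. Qed.

Lemma nf_red (w : seq letter) : red w -> nf w = w.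
Proof.
elim: w => [|x w IH] //= /andP[rw nc]; rewrite IH //.
by rewrite /pushl; move: nc; rewrite -cancelE; case: cancel.
Qed.

Lemma glen_red (w : seq letter) : red w -> glen w = size w.
Proof. by move=> rw; rewrite glen_nf nf_red. Qed.

Lemma glen_cat (w1 w2 : seq letter) : glen (w1 ++ w2) <= glen w1 + glen w2.
Proof.
rewrite (glen_eq (gEq_cat (gEq_sym (nf_gEq w1)) (gEq_sym (nf_gEq w2)))).
by rewrite (glen_nf w1) (glen_nf w2) -size_cat glen_size.
Qed.

Lemma glen_cat3 (w1 w2 w3 : seq letter) : glen (w1 ++ w2 ++ w3) <= glen w1 + glen w2 + glen w3.
Proof.
apply: leq_trans (glen_cat _ _) _; rewrite -addnA leq_add2l; exact: glen_cat.
Qed.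

Lemma winv_cat (w1 w2 : seq letter) : winv (w1 ++ w2) = winv w2 ++ winv w1.
Proof. by rewrite /winv map_cat rev_cat. Qed.

Lemma winvK : involutive (@winv V).
Proof. by move=> w; rewrite /winv map_rev revK -map_comp map_id_in // => x _ /=; rewrite linvK. Qed.

Lemma gEq_winv w w' : gEq w w' -> gEq (winv w) (winv w').
Proof.
elim=> [x y H|x|x y _ IH|x y z _ IH1 _ IH2].
- apply: gEq_step; case: H => [w1 w2 a|w1 w2 a b H].
    rewrite !winv_cat -!catA (_ : winv [:: a; linv a] = [:: a; linv a]); last by rewrite /winv /= linvK.
    exact: rs_cancel.
  rewrite !winv_cat -!catA (_ : winv [:: a; b] = [:: linv b; linv a]) //.
  rewrite (_ : winv [:: b; a] = [:: linv a; linv b]) //.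
  by apply: rs_comm; rewrite /= Esym.
- exact: gEq_refl.
- exact: gEq_sym.
- exact: gEq_trans IH1 IH2.
Qed.

Lemma gEq_rev w w' : gEq w w' -> gEq (rev w) (rev w').
Proof.
elim=> [x y H|x|x y _ IH|x y z _ IH1 _ IH2].
- apply: gEq_step; case: H => [w1 w2 a|w1 w2 a b H].
    rewrite !rev_cat -!catA (_ : rev [:: a; linv a] = [:: linv a; linv (linv a)]); last by rewrite linvK.
    exact: rs_cancel.
  rewrite !rev_cat -!catA (_ : rev [:: a; b] = [:: b; a]) // (_ : rev [:: b; a] = [:: a; b]) //.
  by apply: rs_comm; rewrite Esym.
- exact: gEq_refl.
- exact: gEq_sym.
- exact: gEq_trans IH1 IH2.
Qed.

Lemma glen_winv (w : seq letter) : glen (winv w) = glen w.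
Proof.
have H u : glen (winv u) <= glen u.
  rewrite (glen_eq (gEq_winv (gEq_sym (nf_gEq u)))).
  by rewrite (glen_nf u); apply: leq_trans (glen_size _) _; rewrite size_rev size_map.
by apply/eqP; rewrite eqn_leq H /=; rewrite -{1}(winvK w) H.
Qed.

Lemma gEq_winvl (u : seq letter) : gEq (winv u ++ u) [::].
Proof.
elim: u => [|x u IH]; first exact: gEq_refl.
have -> : winv (x :: u) ++ x :: u = winv u ++ [:: linv x; linv (linv x)] ++ u.
  by rewrite /winv /= rev_cons -cats1 -catA linvK.
apply: gEq_trans IH; apply: gEq_step; exact: rs_cancel.
Qed.

Lemma gEq_winvr (u : seq letter) : gEq (u ++ winv u) [::].
Proof. by have := gEq_winvl (winv u); rewrite winvK. Qed.

Lemma glen_nil : glen [::] = 0. Proof. by rewrite glen_nf. Qed.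

Lemma glen0 (w : seq letter) : glen w = 0 -> gEq w [::].
Proof.
rewrite glen_nf => /size0nil H; apply: gEq_trans (gEq_sym (nf_gEq w)) _.
rewrite H; exact: gEq_refl.
Qed.

Lemma glen1 c : glen [:: c] = 1.
Proof. by rewrite glen_red. Qed.

Lemma gpowS (w : seq letter) n : gpow w n.+1 = w ++ gpow w n. Proof. by []. Qed.

Lemma gEq_gpow w w' n : gEq w w' -> gEq (gpow w n) (gpow w' n).
Proof.
move=> H; elim: n => [|n IH]; first exact: gEq_refl.
by rewrite !gpowS; apply: gEq_cat.
Qed.

Lemma size_gpow (w : seq letter) n : size (gpow w n) = n * size w.
Proof. by elim: n => [|n IH] //; rewrite gpowS size_cat IH mulSn. Qed.

Lemma glen_gpow (w : seq letter) n : glen (gpow w n) <= n * glen w.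
Proof.
elim: n => [|n IH]; first by rewrite glen_nil.
rewrite gpowS mulSn; apply: leq_trans (glen_cat _ _) _; by rewrite leq_add2l.
Qed.

Lemma gEq_conj_gpow (u g : seq letter) n :
  gEq (gpow (winv u ++ g ++ u) n) (winv u ++ gpow g n ++ u).
Proof.
elim: n => [|n IH] /=; first exact: gEq_sym (gEq_winvl u).
rewrite gpowS; apply: gEq_trans (gEq_cat (gEq_refl _) IH) _.
rewrite gpowS -!catA; do 2 apply: gEq_cat (gEq_refl _) _.
rewrite catA; have := gEq_cat (gEq_winvr u) (gEq_refl (gpow g n ++ u)).
by [].
Qed.

Lemma cancels_cat x p q : cancels x (p ++ q) = if has (dl x) p then cancels x p else cancels x q.
Proof.
rewrite /cancels filter_cat has_filter.
by case: (filter (dl x) p).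
Qed.

Lemma red_cat p q : red p -> red q ->
  (forall pre x p', p = pre ++ x :: p' -> ~~ has (dl x) p' -> ~~ cancels x q) ->
  red (p ++ q).
Proof.
elim: p => [|y p IH] //= /andP[rp nc] rq H.
rewrite IH //; last by move=> pre x p' e; apply: (H (y :: pre)); rewrite e.
rewrite cancels_cat; case: ifP => // hp.
rewrite andTb; apply: (H [::] y p) => //; by rewrite hp.
Qed.

Definition cr (w : seq letter) := forall c, ~~ (cancels c w && cancels (linv c) (rev w)).

Lemma red_gpow g n : red g -> cr g -> red (gpow g n).
Proof.
move=> rg cg; elim: n => [|n IH] //; rewrite gpowS.
apply: red_cat => // pre x p' e nh.
case: n {IH} => [|n]; first by [].
rewrite gpowS cancels_cat.
have -> : has (dl x) g by apply/hasP; exists x; rewrite ?e ?mem_cat ?inE ?eqxx ?orbT // /dl dep_refl.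
have := cg x; apply: contra => ->; rewrite andTb.
rewrite /cancels /= linvK filter_rev e filter_cat /=.
have -> : dl (linv x) x by rewrite /dl dep_refl.
have -> : filter (dl (linv x)) p' = [::].
  by move: nh; rewrite has_filter negbK => /eqP.
by rewrite rev_cat /=.
Qed.

Lemma K3 g n : cr (nf g) -> glen (gpow g n) = n * glen g.
Proof.
move=> cg; rewrite (glen_eq (gEq_gpow n (gEq_sym (nf_gEq g)))).
by rewrite glen_red ?red_gpow ?red_nf // size_gpow glen_nf.
Qed.

Lemma gEq_sides (u m : seq letter) : gEq (u ++ (winv u ++ m ++ u) ++ winv u) m.
Proof.
have -> : u ++ (winv u ++ m ++ u) ++ winv u = (u ++ winv u) ++ m ++ (u ++ winv u) by rewrite -!catA.
have := gEq_cat (gEq_winvr u) (gEq_cat (gEq_refl m) (gEq_winvr u)).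
by rewrite /= cats0.
Qed.

Lemma K1 g : cr (nf g) -> cyc_reduced E g.
Proof.
move=> cg u; rewrite leqNgt; apply/negP => lt.
set k := glen (winv u ++ g ++ u) in lt; set L := glen g in lt.
set N := (2 * glen u).+1.
have e1 := K3 N cg.
have e2 : gEq (gpow g N) (u ++ gpow (winv u ++ g ++ u) N ++ winv u).
  apply: gEq_sym; apply: gEq_trans (gEq_cat (gEq_refl u) (gEq_cat (gEq_conj_gpow u g N) (gEq_refl _))) _.
  exact: gEq_sides.
have := glen_cat3 u (gpow (winv u ++ g ++ u) N) (winv u).
rewrite -(glen_eq e2) e1 glen_winv.
have := glen_gpow (winv u ++ g ++ u) N; rewrite -/k.
rewrite /N; nia.
Qed.

Lemma filter_cancel a r s : cancel a r = Some s -> filter (dl a) s = behead (filter (dl a) r).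
Proof.
elim: r s => [|x r IH] s //=.
case D: (dep a.1 x.1).
  by case: eqP => // -> [<-] /=; rewrite {2}/dl /= dep_refl.
case C: (cancel a r) => [s'|] //= [<-] /=.
rewrite {1}/dl D; have Hd : dl a x = false by []. by rewrite Hd; exact: IH.
Qed.

Lemma Dec c w : cancels c w -> cancels (linv c) (rev w) ->
  exists h, gEq w (linv c :: h ++ [:: c]) /\ size h + 2 = size w.
Proof.
move=> c1 c2; move: (c1); rewrite -cancelE; case C: cancel => [s|] // _.
have g1 := cancel_gEq C; have z1 := size_cancel C.
have c3 : cancels (linv c) (rev s).
  move: c2; rewrite /cancels !filter_rev (filter_cancel C) linvK.
  have [t Ht] := cancels_filter c1; rewrite (_ : dl (linv c) = dl c) // Ht /=.
  rewrite rev_cons; clear Ht; case/lastP: t => [|t y] /=; first by move=> /eqP [] /eqP; rewrite (negbTE (linv_neq c)).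
  by rewrite rev_rcons.
move: (c3); rewrite -cancelE; case C2: cancel => [t|] // _.
have g2 := cancel_gEq C2; have z2 := size_cancel C2.
exists (rev t); split; last by rewrite size_rev -z1; move: z2; rewrite size_rev addn2 => <-.
have h1 : gEq w (linv c :: s).
  apply: gEq_trans (gEq_cons (linv c) (gEq_sym g1)).
  apply: gEq_sym; apply: gEq_step; have := rs_cancel E [::] w (linv c); by rewrite linvK.
apply: gEq_trans h1 (gEq_cons _ _).
have h2 := gEq_rev g2; rewrite rev_cons revK in h2.
apply: gEq_trans (_ : gEq s (rcons s (linv c) ++ [:: c])) (gEq_cat (gEq_sym h2) (gEq_refl _)).
rewrite -cats1 -catA /= -{1}[s]cats0; apply: gEq_cat (gEq_refl _) _.
apply: gEq_sym; apply: gEq_step; have := rs_cancel E [::] [::] (linv c); by rewrite linvK.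
Qed.


Lemma ncr_dec g : ~ cr (nf g) -> exists c h, gEq g (linv c :: h ++ [:: c]) /\
  size h + 2 = glen g /\ glen h = size h.
Proof.
move=> ncr.
have [c Hc] : exists c, cancels c (nf g) && cancels (linv c) (rev (nf g)).
  apply: NNPP => H; apply: ncr => c; apply/negP => Hc'; apply: H; exists c; exact: Hc'.
case/andP: Hc => c1 c2; have [h [Hg Hs]] := Dec c1 c2.
have Hg' := gEq_trans (gEq_sym (nf_gEq g)) Hg.
exists c, h; split => //; split; first by rewrite glen_nf.
apply/eqP; rewrite eqn_leq glen_size /=.
have := glen_cat3 [:: linv c] h [:: c]; rewrite -(glen_eq Hg') !glen1 glen_nf -Hs.
lia.
Qed.

Lemma notC_dec g : ~ cyc_reduced E g -> exists c h, gEq g (linv c :: h ++ [:: c]) /\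
  size h + 2 = glen g /\ glen h = size h.
Proof. by move=> nC; apply: ncr_dec => H; apply: nC; apply: K1. Qed.

Lemma C_cr g : cyc_reduced E g -> cr (nf g).
Proof.
move=> C; apply: NNPP => ncr; have [c [h [Hg [Hs Hh]]]] := ncr_dec ncr.
have := C [:: linv c].
have e : gEq (winv [:: linv c] ++ g ++ [:: linv c]) h.
  rewrite (_ : winv [:: linv c] = [:: c]); last by rewrite /winv /= linvK.
  apply: gEq_trans (gEq_sides [:: c] h).
  apply: gEq_cat (gEq_refl _) (gEq_cat Hg (gEq_refl _)).
rewrite (glen_eq e); lia.
Qed.

Lemma main g :
  [/\ (cyc_reduced E g <->
        ~ (exists u h : seq letter,
              gEq g (winv u ++ h ++ u) /\
              glen g = glen (winv u) + glen h + glen u /\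
              ~ gEq u [::])),
      (cyc_reduced E g <->
        forall n, 2 <= n -> glen (gpow g n) = n * glen g),
      (cyc_reduced E g <->
        exists2 n, 2 <= n & glen (gpow g n) = n * glen g) &
      (cyc_reduced E g <->
        forall g1 g2 : seq letter,
          gEq g (g1 ++ g2) -> glen g = glen g1 + glen g2 ->
          glen (g2 ++ g1) = glen g2 + glen g1)].
Proof.
have iv_back : (exists2 n, 2 <= n & glen (gpow g n) = n * glen g) -> cyc_reduced E g.
  case=> n n2 Hn; apply: NNPP => nC; have [c [h [Hg [Hs Hh]]]] := notC_dec nC.
  have e : gEq (gpow g n) (winv [:: c] ++ gpow h n ++ [:: c]).
    apply: gEq_trans (gEq_gpow n Hg) _.
    exact: (gEq_conj_gpow [:: c] h n).
  have := glen_cat3 (winv [:: c]) (gpow h n) [:: c]; rewrite -(glen_eq e) Hn glen_winv glen1.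
  have := glen_gpow h n; rewrite Hh -Hs.
  nia.
split.
- split.
  + move=> C [u [h [Hg [Hl Hu]]]].
    have u0 : glen u != 0 by apply/eqP => /glen0.
    have := C (winv u); rewrite winvK.
    rewrite (glen_eq (gEq_trans (gEq_cat (gEq_refl u) (gEq_cat Hg (gEq_refl (winv u)))) (gEq_sides u h))).
    rewrite Hl glen_winv; lia.
  + move=> H; apply: NNPP => nC; have [c [h [Hg [Hs Hh]]]] := notC_dec nC; apply: H.
    exists [:: c], h; split; first exact: Hg.
    split; first by rewrite /winv /= !glen1; lia.
    by move=> /glen_eq; rewrite glen1 glen_nil.
- split.
  + by move=> C n _; apply: K3; exact: C_cr.
  + by move=> H; apply: iv_back; exists 2 => //; exact: H.
- split => //.
  by move=> C; exists 2 => //; apply: K3; exact: C_cr.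
- split.
  + move=> C g1 g2 Hg Hl; apply/eqP; rewrite eqn_leq glen_cat /=.
    have := C g1.
    have e : gEq (winv g1 ++ g ++ g1) (g2 ++ g1).
      apply: gEq_trans (gEq_cat (gEq_refl _) (gEq_cat Hg (gEq_refl _))) _.
      rewrite (_ : winv g1 ++ (g1 ++ g2) ++ g1 = (winv g1 ++ g1) ++ (g2 ++ g1)); last by rewrite -!catA.
      exact: (gEq_cat (gEq_winvl g1) (gEq_refl _)).
    rewrite (glen_eq e) Hl; lia.
  + move=> H; apply: NNPP => nC; have [c [h [Hg [Hs Hh]]]] := notC_dec nC.
    have l2 : glen (h ++ [:: c]) <= size h + 1.
      by apply: leq_trans (glen_size _) _; rewrite size_cat.
    have l1 : glen g <= glen [:: linv c] + glen (h ++ [:: c]).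
      rewrite (glen_eq Hg); exact: (glen_cat [:: linv c] (h ++ [:: c])).
    rewrite glen1 in l1.
    have := H [:: linv c] (h ++ [:: c]) Hg; rewrite glen1.
    have e : gEq ((h ++ [:: c]) ++ [:: linv c]) h.
      rewrite -catA; have := gEq_cat (gEq_refl h) (gEq_step (rs_cancel E [::] [::] c)).
      by rewrite /= cats0.
    rewrite (glen_eq e); lia.
Qed.

End Main.

Theorem lemma2p1 (V : finType) (E : rel V)
  (Esym : symmetric E) (Eirr : irreflexive E) (g : seq (letter V)) :
  [/\ (cyc_reduced E g <->
        ~ (exists u h : seq (letter V),
              gEq E g (winv u ++ h ++ u) /\
              glen E g = glen E (winv u) + glen E h + glen E u /\
              ~ gEq E u [::])),
      (cyc_reduced E g <->
        forall n, 2 <= n -> glen E (gpow g n) = n * glen E g),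
      (cyc_reduced E g <->
        exists2 n, 2 <= n & glen E (gpow g n) = n * glen E g) &
      (cyc_reduced E g <->
        forall g1 g2 : seq (letter V),
          gEq E g (g1 ++ g2) -> glen E g = glen E g1 + glen E g2 ->
          glen E (g2 ++ g1) = glen E g2 + glen E g1)].
Proof. exact: main. Qed.
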